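(* There is a constant $C>0$ such that for every $n\ge1$: $\mathrm{Sen}(\overline{\mathcal S})\lesssim C\cdot\mathrm{Sen}(\tilde{\mathcal N})$, i.e., for every integer $0\le K\le\lfloor n/2\rfloor$ there is a probability measure $\mu_K$ on $[0,1/2]$ such that, entrywise, $\mathrm{Sen}(\overline{\mathcal S})_K\le C\int\mathrm{Sen}(\tilde{\mathcal N})_P\,d\mu_K(P)$.
   Context: Let $\mathbb{I}^n=\{0,1\}^n$ with Hamming distance $d$; operators on $\mathbb{R}^{\mathbb{I}^n}$ are identified with matrices and $A\le B$ means $B-A$ has nonnegative entries. For $0\le k\le n$, $(S_kf)(x)=\binom nk^{-1}\sum_{y:\,d(x,y)=k}f(y)$. $\mathrm{Sen}(\overline{\mathcal S})_K=\frac1{K+1}\sum_{\ell=0}^KS_\ell$ for $0\le K\le\lfloor n/2\rfloor$. For $p\in[0,1/2]$, $\tilde N_p=\sum_{k=0}^n\binom nkp^k(1-p)^{n-k}S_k$, and $\mathrm{Sen}(\tilde{\mathcal N})_P=\frac1P\int_0^P\tilde N_p\,dp$ for $P\in(0,1/2]$, with $\mathrm{Sen}(\tilde{\mathcal N})_0$ the identity (limit from above). For families $\mathcal A,\mathcal B$ of nonnegative matrices, $\mathcal A\lesssim\mathcal B$ means every $A\in\mathcal A$ satisfies $A\le\int B\,d\mu_A(B)$ for some probability measure $\mu_A$ on $\mathcal B$. *)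

(* Defs.v *)
From HB Require Import structures.
From mathcomp Require Import all_boot all_order all_algebra.
From mathcomp Require Import all_classical all_reals all_analysis.
Unset Printing Implicit Defensive.
Import Order.TTheory GRing.Theory Num.Theory.
Import numFieldNormedType.Exports.
Local Open Scope ring_scope.
Local Open Scope classical_set_scope.

Definition cube (n : nat) := {ffun 'I_n -> bool}.

Definition hamming (n : nat) (x y : cube n) : nat := #|[set i | x i != y i]|.

(* Operators on R^{I^n} identified with their matrices: entry (x,y). *)
Definition op (R : realType) (n : nat) := cube n -> cube n -> R.

(* (S_k f)(x) = binom(n,k)^{-1} sum_{d(x,y)=k} f(y) : matrix entries. *)
Definition Sk (R : realType) (n k : nat) : op R n :=
  fun x y => if hamming n x y == k then ('C(n, k)%:R)^-1 else 0.

Definition SenS (R : realType) (n K : nat) : op R n :=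
  fun x y => (K.+1%:R)^-1 * \sum_(0 <= l < K.+1) Sk R n l x y.

Definition Ntilde (R : realType) (n : nat) (p : R) : op R n :=
  fun x y => \sum_(0 <= k < n.+1)
     'C(n, k)%:R * p ^+ k * (1 - p) ^+ (n - k) * Sk R n k x y.

Definition idop (R : realType) (n : nat) : op R n :=
  fun x y => if x == y then 1 else 0.

Definition SenN (R : realType) (n : nat) (P : R) : op R n :=
  fun x y => if P == 0 then idop R n x y
             else P^-1 * (\int[@lebesgue_measure R]_(p in `[0, P]) Ntilde R n p x y).

(* Main.v *)
From HB Require Import structures.
From mathcomp Require Import all_boot all_order all_algebra.
From mathcomp Require Import all_classical all_reals all_analysis.
From mathcomp Require Import measurable_realfun.
From mathcomp Require Import ring lra.
Require Import Defs.
Import Order.TTheory GRing.Theory Num.Theory.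
Import numFieldNormedType.Exports.
Local Open Scope ring_scope.

Section Comb.
Variable R : realFieldType.

Lemma eqle (x y : R) : x = y -> x <= y. Proof. by move->. Qed.

Definition wB (N j : nat) (p : R) : R := 'C(N, j)%:R * p ^+ j * (1 - p) ^+ (N - j).

Lemma wB_ge0 N j p : 0 <= p <= 1 -> 0 <= wB N j p.
Proof.
move=> /andP[p0 p1]; rewrite /wB; apply: mulr_ge0; first apply: mulr_ge0.
- exact: ler0n.
- exact: exprn_ge0.
- by apply: exprn_ge0; rewrite subr_ge0.
Qed.

Lemma wB_sum N p : \sum_(0 <= j < N.+1) wB N j p = 1.
Proof.
rewrite big_mkord.
have := exprDn (1 - p) p N; rewrite subrK expr1n => ->.
apply: eq_bigr => i _; rewrite /wB -mulr_natl; ring.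
Qed.

Lemma wB_half N d p : (d < N.+1)%N ->
  \sum_(0 <= j < d.+1) wB N j p <= \sum_(d.+1 <= j < N.+1) wB N j p ->
  2^-1 <= \sum_(d.+1 <= j < N.+1) wB N j p.
Proof.
move=> dN H; have := wB_sum N p.
rewrite (@big_cat_nat _ _ _ d.+1) // => E.
have h : 1 <= 2 * \sum_(d.+1 <= j < N.+1) wB N j p.
  set a := \sum_(0 <= j < d.+1) wB N j p in E H *. set b := \sum_(d.+1 <= j < N.+1) wB N j p in E H *. have E' : a + b = 1 by exact: E. lra.
by rewrite -[2^-1]mulr1 ler_pdivrMl ?ltr0n.
Qed.

Lemma wB_ratio N j p : 0 <= p <= 1 -> (j < N)%N ->
  2 * j.+1%:R * (1 - p) <= (N - j)%:R * p -> 2 * wB N j p <= wB N j.+1 p.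
Proof.
move=> /andP[p0 p1] jN H.
have e : (N - j = (N - j.+1).+1)%N by rewrite subnS prednK // subn_gt0.
rewrite /wB e exprS.
set c := p ^+ j * (1 - p) ^+ (N - j.+1).
have c0 : 0 <= c by apply: mulr_ge0; apply: exprn_ge0; rewrite ?subr_ge0.
have bin := mul_bin_left N j.
have b1 : j.+1%:R * 'C(N, j.+1)%:R = (N - j)%:R * 'C(N, j)%:R :> R.
  by rewrite -!natrM bin.
have cj0 : 0 <= 'C(N, j)%:R :> R by exact: ler0n.
have jp : 0 < j.+1%:R :> R by rewrite ltr0n.
suff: 2 * 'C(N, j)%:R * (1 - p) <= 'C(N, j.+1)%:R * p.
  move=> h.
  have := ler_wpM2r c0 h.
  rewrite exprS -[X in X <= _ -> _]/(_) => h2.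
  apply: le_trans (_ : 2 * 'C(N, j)%:R * (1 - p) * c <= _).
    by rewrite /c; apply: eqle; ring.
  apply: le_trans h2 _; apply: eqle; rewrite /c; ring.
rewrite -(ler_pM2l jp).
have -> : j.+1%:R * ('C(N, j.+1)%:R * p) = (N - j)%:R * 'C(N, j)%:R * p :> R.
  by rewrite mulrA b1.
have := ler_wpM2r cj0 H.
move=> h; apply: le_trans (_ : 2 * j.+1%:R * (1 - p) * 'C(N, j)%:R <= _).
  by apply: eqle; ring.
by apply: le_trans h _; apply: eqle; ring.
Qed.


Lemma wB_chain N K p : 0 <= p <= 1 ->
  (forall j, (j <= K)%N -> 2 * wB N j p <= wB N j.+1 p) ->
  forall k, (k <= K)%N -> \sum_(0 <= j < k.+1) wB N j p <= wB N k.+1 p.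
Proof.
move=> p01 H; elim=> [|k IH] kK.
  rewrite big_nat1; apply: le_trans (H 0%N kK).
  have := wB_ge0 N 0 p p01; lra.
rewrite big_nat_recr //=.
have := IH (ltnW kK); have := H k.+1 kK; lra.
Qed.

Lemma low_high_A N K d p : 0 <= p <= 1 -> (d <= K)%N -> (K < N)%N ->
  (forall j, (j <= K)%N -> 2 * wB N j p <= wB N j.+1 p) ->
  \sum_(0 <= j < d.+1) wB N j p <= \sum_(d.+1 <= j < N.+1) wB N j p.
Proof.
move=> p01 dK KN H.
apply: le_trans (wB_chain N K p p01 H d dK) _.
rewrite big_ltn; last by rewrite ltnS; apply: leq_trans KN.
rewrite lerDl; rewrite big_nat_cond; apply: sumr_ge0 => i _; exact: wB_ge0.
Qed.

Lemma ratio_hyp (N K j : nat) (p : R) : 0 <= p -> p * N%:R = 4 * K.+1%:R ->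
  (j <= K)%N -> (j <= N)%N ->
  2 * j.+1%:R * (1 - p) <= (N - j)%:R * p.
Proof.
move=> p0 pN jK jN.
rewrite natrB // mulrBl [N%:R * p]mulrC pN.
have jp : 0 <= j%:R * p by apply: mulr_ge0; rewrite ?ler0n.
have : j%:R <= K%:R :> R by rewrite ler_nat.
rewrite -(addn1 j) -(addn1 K) !natrD => jK'; have K0 : 0 <= K%:R :> R by rewrite ler0n. nra.
Qed.

End Comb.
Arguments wB {R} N j p.

Section NatL.
Local Open Scope nat_scope.

Lemma binsym_aux N d : (d <= N)%N ->
  \sum_(0 <= j < d.+1) 'C(N, N - j) = \sum_(N - d <= i < N.+1) 'C(N, i).
Proof.
elim: d => [|d IH] dN.
  by rewrite big_nat1 subn0 big_nat1.
rewrite big_nat_recr //= IH ?(ltnW dN) //.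
rewrite (@big_ltn _ _ _ (N - d.+1)); last by rewrite ltnS leq_subr.
have -> : (N - d.+1).+1 = N - d by rewrite subnS prednK // subn_gt0.
by rewrite addnC.
Qed.

Lemma binsym N d : (d.*2 < N)%N ->
  (\sum_(0 <= j < d.+1) 'C(N, j) <= \sum_(d.+1 <= j < N.+1) 'C(N, j))%N.
Proof.
move=> dN.
have dN' : (d <= N)%N by apply: leq_trans (ltnW dN); rewrite -addnn leq_addr.
have -> : \sum_(0 <= j < d.+1) 'C(N, j) = \sum_(0 <= j < d.+1) 'C(N, N - j).
  rewrite big_nat_cond [RHS]big_nat_cond; apply: eq_bigr => j /andP[/andP[_ jd] _].
  by rewrite bin_sub // (leq_trans _ dN').
rewrite binsym_aux // (@big_cat_nat _ _ _ (N - d) d.+1 N.+1) //=.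
- exact: leq_addl.
- rewrite ltn_subRL; by rewrite addnn.
- exact: leq_trans (leq_subr d N) (leqnSn N).
Qed.

End NatL.

Section CaseB.
Variable R : realFieldType.

Lemma wB_half_eq N j : wB N j (2^-1 : R) = 'C(N, j)%:R * 2^-1 ^+ N.
Proof.
rewrite /wB; case: (leqP j N) => jN.
  have -> : 1 - 2^-1 = 2^-1 :> R by rewrite {1}(splitr 1) mul1r addrK.
  by rewrite -mulrA -exprD subnKC.
by rewrite bin_small // !mul0r.
Qed.

Lemma low_high_B N d : (d.*2 < N)%N ->
  \sum_(0 <= j < d.+1) wB N j (2^-1 : R) <= \sum_(d.+1 <= j < N.+1) wB N j 2^-1.
Proof.
move=> dN.
rewrite (eq_bigr _ (fun j _ => wB_half_eq N j)).
rewrite [X in _ <= X](eq_bigr _ (fun j _ => wB_half_eq N j)).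
rewrite -!mulr_suml ler_wpM2r ?exprn_ge0 ?invr_ge0 ?ler0n //.
by rewrite -!natr_sum ler_nat binsym.
Qed.

End CaseB.

Section Poly.
Variable R : realFieldType.

Definition Bp (n j : nat) : {poly R} := 'C(n, j)%:R *: ('X^j * (1 - 'X) ^+ (n - j)).

Lemma deriv_onemX : (1 - 'X : {poly R})^`() = -1.
Proof. by rewrite derivB derivX -polyC1 derivC sub0r. Qed.

Lemma Bp_deriv n j : (Bp n.+1 j.+1)^`() = n.+1%:R *: (Bp n j - Bp n j.+1).
Proof.
rewrite /Bp subSS derivZ derivM derivXn deriv_exp deriv_onemX /=.
have e1 := mul_bin_diag n.+1 j.
have e2 := mul_bin_down n.+1 j.+1.
rewrite /= in e1 e2.
rewrite subSS in e2.
rewrite -!mul_polyC !polyC_natr.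
case: (ltnP j n) => jn.
  have [m hm] : exists m, (n - j = m.+1)%N by exists (n - j).-1; rewrite prednK // subn_gt0.
  have hm' : (n - j.+1 = m)%N by rewrite subnS hm.
  rewrite hm hm' in e2 *.
  rewrite /= !exprS.
  set A := ('X^j * ((1 - 'X) * (1 - 'X) ^+ m)) : {poly R}.
  set B := ('X * 'X^j * (1 - 'X) ^+ m) : {poly R}.
  rewrite mulrBr !mulrA -!natrM e1 e2 !natrM /A /B; ring.
have -> : (n - j = 0)%N by apply/eqP; rewrite subn_eq0.
have -> : (n - j.+1 = 0)%N by apply/eqP; rewrite subn_eq0 (leq_trans jn).
rewrite /= expr0 !mulr0n mulr0 addr0 !mulr1.
rewrite (bin_small (n := n) (m := j.+1)) ?ltnS // mul0r subr0.
by rewrite mulrA -natrM e1 natrM -mulr_natr; ring.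
Qed.

Definition Tp n d : {poly R} := \sum_(d <= i < n.+1) Bp n.+1 i.+1.

Lemma Tp_deriv n d : (d <= n)%N -> (Tp n d)^`() = n.+1%:R *: Bp n d.
Proof.
move=> dn; rewrite /Tp raddf_sum.
rewrite (eq_bigr (fun i => n.+1%:R *: (Bp n i - Bp n i.+1))); last first.
  by move=> i _; exact: Bp_deriv.
rewrite -scaler_sumr.
have -> : \sum_(d <= i < n.+1) (Bp n i - Bp n i.+1) =
          - \sum_(d <= i < n.+1) (Bp n i.+1 - Bp n i).
  by rewrite -sumrN; apply: eq_bigr => i _; rewrite opprB.
rewrite telescope_sumr; last exact: leqW.
rewrite opprB.
by rewrite {2}/Bp bin_small // scale0r subr0.
Qed.

Lemma Bp_horner n j p : (Bp n j).[p] = 'C(n, j)%:R * (p ^+ j * (1 - p) ^+ (n - j)).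
Proof. by rewrite /Bp hornerZ hornerM hornerXn horner_exp hornerD hornerN -polyC1 hornerC hornerX. Qed.

Lemma Tp_horner n d p : (Tp n d).[p] = \sum_(d <= i < n.+1) wB n.+1 i.+1 p.
Proof.
rewrite /Tp horner_sum; apply: eq_bigr => i _.
by rewrite Bp_horner /wB mulrA.
Qed.

Lemma Tp_horner0 n d : (Tp n d).[0] = 0.
Proof.
rewrite Tp_horner big1 // => i _.
by rewrite /wB expr0n /= mulr0 mul0r.
Qed.

End Poly.

Arguments Bp {R} n j.
Arguments Tp {R} n d.

Section Ana.
Variable R : realType.
Local Open Scope classical_set_scope.

Lemma hamming_le n (x y : cube n) : (hamming n x y <= n)%N.
Proof. by rewrite /hamming; apply: leq_trans (max_card _) _; rewrite card_ord. Qed.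

Lemma collapse (m d : nat) (G : nat -> R) :
  \sum_(0 <= k < m) (if d == k then G k else 0) = if (d < m)%N then G d else 0.
Proof.
case: ltnP => dm.
  rewrite big_mkord (bigD1 (Ordinal dm)) //= eqxx big1 ?addr0 // => i ne.
  rewrite ifN //; apply: contra ne => /eqP di; apply/eqP/val_inj; by rewrite /= di.
rewrite big_nat_cond big1 // => k /andP[/andP[_ km] _].
rewrite ifN //; apply/eqP => dk; move: km; by rewrite -dk ltnNge dm.
Qed.

Lemma Ntilde_eq n (x y : cube n) p :
  Ntilde R n p x y = (('C(n, hamming n x y)%:R)^-1 *: Bp n (hamming n x y)).[p].
Proof.
rewrite /Ntilde /Sk.
rewrite (eq_bigr (fun k => if hamming n x y == k then
   'C(n, k)%:R * p ^+ k * (1 - p) ^+ (n - k) * ('C(n, k)%:R)^-1 else 0)); last first.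
  by move=> k _; case: ifP => _; rewrite ?mulr0.
rewrite collapse ltnS hamming_le hornerZ Bp_horner.
have c0 : 'C(n, hamming n x y)%:R != 0 :> R by rewrite pnatr_eq0 -lt0n bin_gt0 hamming_le.
by field.
Qed.

Lemma SenS_eq n K (x y : cube n) : SenS R n K x y =
  if (hamming n x y <= K)%N then (K.+1%:R)^-1 * ('C(n, hamming n x y)%:R)^-1 else 0.
Proof.
rewrite /SenS /Sk.
rewrite (eq_bigr (fun k => if hamming n x y == k then ('C(n, k)%:R)^-1 else 0)) //.
rewrite collapse ltnS; case: ifP => _ //; by rewrite mulr0.
Qed.

Definition qp n d : {poly R} := (n.+1%:R * 'C(n, d)%:R)^-1 *: Tp n d.

Lemma Rint_Ntilde n (x y : cube n) P : 0 < P ->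
  \int[@lebesgue_measure R]_(p in `[0, P]) Ntilde R n p x y = (qp n (hamming n x y)).[P].
Proof.
move=> P0.
set d := hamming n x y.
set r := (('C(n, d)%:R)^-1 *: Bp n d) : {poly R}.
have Nf : (fun p => Ntilde R n p x y) = horner r by apply/funext => p; exact: Ntilde_eq.
rewrite Nf /Rintegral (@continuous_FTC2 _ _ (horner (qp n d))) //.
- have q0 : (qp n d).[0] = 0 by rewrite /qp hornerZ Tp_horner0 mulr0.
  by rewrite -EFinB /= q0 subr0.
- exact: continuous_subspaceT (@continuous_horner _ r).
- split.
  + by move=> z _; exact: derivable_horner.
  + exact: cvg_at_right_filter (@continuous_horner _ _ _).
  + exact: cvg_at_left_filter (@continuous_horner _ _ _).
- move=> z _; rewrite -derivE /qp derivZ Tp_deriv ?hamming_le // scalerA.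
  have c0 : 'C(n, d)%:R != 0 :> R by rewrite pnatr_eq0 -lt0n bin_gt0 hamming_le.
  have n0 : n.+1%:R != 0 :> R by rewrite pnatr_eq0.
  by rewrite /r invfM mulrAC mulVf // mul1r.
Qed.

Lemma SenN_pos n (x y : cube n) P : 0 < P ->
  SenN R n P x y = P^-1 * (qp n (hamming n x y)).[P].
Proof.
move=> P0; rewrite /SenN ifN ?gt_eqF // Rint_Ntilde //.
Qed.

Lemma qp_val n d P : (qp n d).[P] =
  (\sum_(d.+1 <= j < n.+2) wB n.+1 j P) / (n.+1%:R * 'C(n, d)%:R).
Proof. by rewrite /qp hornerZ Tp_horner big_add1 /= mulrC. Qed.

Lemma qp_ge0 n d P : 0 <= P <= 1 -> 0 <= (qp n d).[P].
Proof.
move=> P01; rewrite qp_val; apply: divr_ge0.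
  by rewrite big_nat_cond; apply: sumr_ge0 => i _; exact: wB_ge0.
by apply: mulr_ge0; rewrite ler0n.
Qed.

Lemma SenN_meas n (x y : cube n) :
  measurable_fun (U := measurable_realfun.constructive_ereal_extended__canonical__measurable_structure_SigmaRing R) (`[0, 2^-1] : set R) (fun P => (SenN R n P x y)%:E).
Proof.
have -> : (`[0, 2^-1] : set R) = [set 0] `|` `]0, 2^-1].
  apply/seteqP; split => z /=.
    rewrite in_itv /= => /andP[z0 zh].
    case: (eqVneq z 0) => [->|nz]; [by left|right].
    by rewrite /= in_itv /= zh andbT lt_neqAle eq_sym nz z0.
  case=> [->|]; first by rewrite /= in_itv /= lexx invr_ge0 ler0n.
  rewrite /= in_itv /= => /andP[z0 zh]; rewrite in_itv /= (ltW z0) zh //.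
apply/measurable_funU => //.
split; first exact: measurable_fun_set1.
apply: (@eq_measurable_fun _ _ _ (measurable_realfun.constructive_ereal_extended__canonical__measurable_structure_SigmaRing R) _ (EFin \o (fun P => P^-1 * (qp n (hamming n x y)).[P]))).
  by move=> z; rewrite inE /= in_itv /= => /andP[z0 _]; rewrite SenN_pos.
apply/measurable_realfun.measurable_EFinP; apply: subspace_continuous_measurable_fun => //.
apply: continuous_in_subspaceT => z; rewrite inE /= in_itv /= => /andP[z0 _].
apply: continuousM; last exact: continuous_horner.
by apply: continuousV; [rewrite gt_eqF | exact: cvg_id].
Qed.

Definition Pch n K : R :=
  if (8 * K.+1 <= n.+1)%N then 4 * K.+1%:R / n.+1%:R else 2^-1.

Lemma Pch_props n K :
  [/\ 0 < Pch n K, Pch n K <= 2^-1 & Pch n K * n.+1%:R <= 4 * K.+1%:R].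
Proof.
have N0 : 0 < n.+1%:R :> R by rewrite ltr0n.
rewrite /Pch; case: ifP => h.
  have h' : 8 * K.+1%:R <= n.+1%:R :> R by rewrite -(ler_nat R) natrM in h.
  split.
  - by apply: divr_gt0; rewrite ?ltr0n // mulr_gt0 ?ltr0n.
  - rewrite ler_pdivrMr //; lra.
  - by rewrite mulfVK ?gt_eqF.
have h' : n.+1%:R <= 8 * K.+1%:R :> R.
  by rewrite -(ler_nat R) natrM in h; move/negbT: h; rewrite -ltNge => /ltW.
split => //; lra.
Qed.

Lemma Pch_half n K d : (K <= n./2)%N -> (d <= K)%N ->
  2^-1 <= \sum_(d.+1 <= j < n.+2) wB n.+1 j (Pch n K).
Proof.
move=> Kn dK.
have [P0 Ph PN] := Pch_props n K.
have h2 : ((n./2).*2 <= n)%N by rewrite -{2}(odd_double_half n) leq_addl.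
have Kn' : (K <= n)%N.
  apply: (leq_trans Kn); apply: leq_trans h2; by rewrite -addnn leq_addr.
have dn : (d <= n)%N by apply: leq_trans Kn'.
apply: wB_half; first by rewrite ltnS; exact: leqW.
set p := Pch n K in P0 Ph PN *.
have p01 : 0 <= p <= 1 by rewrite (ltW P0) /=; apply: le_trans Ph _; rewrite invf_le1 ?ler1n.
case: (boolP (8 * K.+1 <= n.+1)%N) => h.
  have pN : p * n.+1%:R = 4 * K.+1%:R by rewrite /p /Pch h mulfVK // pnatr_eq0.
  apply: (@low_high_A R n.+1 K d p p01 dK); first by rewrite ltnS.
  move=> j jK; apply: wB_ratio => //.
    by rewrite ltnS (leq_trans jK).
  exact: (@ratio_hyp R n.+1 K j p (ltW P0) pN jK (leq_trans jK (leqW Kn'))).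
have -> : p = 2^-1 by rewrite /p /Pch (negbTE h).
apply: low_high_B; rewrite ltnS; apply: leq_trans h2.
by rewrite leq_double; apply: leq_trans Kn.
Qed.

Lemma fin_ineq (a c P N t : R) : 0 < a -> 0 < c -> 0 < P -> 0 < N ->
  P * N <= 4 * a -> 2^-1 <= t -> a^-1 * c^-1 <= 8 * (P^-1 * (t / (N * c))).
Proof.
move=> a0 c0 P0 N0 PN t2.
have P0' : P != 0 by rewrite gt_eqF.
have N0' : N != 0 by rewrite gt_eqF.
have c0' : c != 0 by rewrite gt_eqF.
have -> : 8 * (P^-1 * (t / (N * c))) = (8 * t) / (P * N) * c^-1 by rewrite !invfM; ring.
rewrite ler_pM2r ?invr_gt0 // ler_pdivlMr ?mulr_gt0 //.
have : a^-1 * (P * N) <= a^-1 * (4 * a) by rewrite ler_pM2l ?invr_gt0.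
rewrite [X in _ <= X -> _]mulrCA mulVf ?gt_eqF // mulr1; lra.
Qed.

End Ana.

Local Open Scope classical_set_scope.

Theorem lemma5 (R : realType) :
  exists C : R, 0 < C /\
  forall n : nat, (0 < n)%N ->
  forall K : nat, (K <= n./2)%N ->
  exists mu : probability (measurableTypeR R) R,
    mu `[0%R, (2^-1)%R] = 1%E /\
    forall x y : cube n,
      ((SenS R n K x y)%:E <=
        C%:E * \int[mu]_(P in `[0%R, (2^-1)%R]) (SenN R n P x y)%:E)%E.
Proof.
exists 8; split; first by rewrite ltr0n.
move=> n n0 K Kn.
have [P0 Ph PN] := Pch_props R n K.
set P := Pch R n K in P0 Ph PN *.
have PD : `[0, 2^-1] P by rewrite /= in_itv /= (ltW P0) Ph.
exists (@dirac _ (measurableTypeR R) P R); split.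
  by rewrite /= diracE mem_set.
move=> x y.
rewrite integral_dirac //; last exact: SenN_meas.
rewrite diracE mem_set // mul1e -EFinM lee_fin.
rewrite SenS_eq; case: ifP => dK; last first.
  apply: mulr_ge0; first by rewrite ler0n.
  rewrite SenN_pos //; apply: mulr_ge0; first by rewrite invr_ge0 ltW.
  apply: qp_ge0; rewrite (ltW P0) /=; apply: le_trans Ph _; by rewrite invf_le1 ?ler1n.
rewrite SenN_pos // qp_val.
apply: fin_ineq; rewrite ?ltr0n ?bin_gt0 ?hamming_le //.
exact: Pch_half.
Qed.
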